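(* Let $k$ be an unramified extension of $\mathbb{Q}_2$ with ring of integers $\mathfrak O_k$, let $C_{2^n}=\langle\sigma\rangle$ ($n\ge1$), and let $\mathcal A$ be a finitely generated $\mathfrak O_k[C_{2^n}]$-module that is torsion-free over $\mathfrak O_k$. Let $H$ be the subgroup of order $2$, $\mathrm{Tr}_H=1+\sigma^{2^{n-1}}$, $\mathcal A^H$ the submodule fixed by $H$, and $\mathrm{Tr}_H\mathcal A$ the image of $\mathrm{Tr}_H$. Then $Q:=\mathrm{Tr}_H\mathcal A/\big((\sigma-1)\mathrm{Tr}_H\mathcal A+2\mathcal A^H\big)$ is free over $\mathfrak O_k/2\mathfrak O_k$. Moreover, if $\mathcal B\subseteq\mathcal A$ is such that the images of $\mathrm{Tr}_H\mathcal B$ form an $\mathfrak O_k/2\mathfrak O_k$-basis of $Q$, then the images of $\mathcal B$ in $\mathcal A/\mathcal A^H$ can be extended to a basis of $\mathcal A/\mathcal A^H$ over $\mathfrak O_k[C_{2^n}]/\langle\mathrm{Tr}_H\rangle$. *)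

(* Defs.v *)
From HB Require Import structures.
From mathcomp Require Import all_boot all_order all_algebra.
Set Implicit Arguments. Unset Strict Implicit. Unset Printing Implicit Defensive.
Import Order.TTheory GRing.Theory Num.Theory.
Local Open Scope ring_scope.

(* Abstract stand-in for O_k, k/Q_2 finite unramified:
   a complete discrete valuation ring (integral domain) with uniformizer 2
   (2 <> 0, 2 not a unit, every nonzero element = unit * 2^k),
   complete for the 2-adic topology, with finite residue field R/2R. *)
Definition unramified_Z2_integers (R : idomainType) : Prop :=
  [/\ (2%:R : R) != 0,
      (2%:R : R) \isn't a GRing.unit,
      (forall x : R, x != 0 -> exists (u : R) (k : nat),
            u \is a GRing.unit /\ x = u * 2%:R ^+ k),
      (exists s : seq R, forall x : R, exists2 y, y \in s & exists d, x - y = 2%:R * d)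
    & (forall u : nat -> R,
         (forall k, exists d, u k.+1 - u k = 2%:R ^+ k * d) ->
         exists l : R, forall k, exists d, l - u k = 2%:R ^+ k * d)].

Section ModuleDefs.
Variables (R : idomainType) (A : lmodType R).

(* action of the polynomial p (element of R[X], i.e. of R[C_{2^n}] via X |-> sigma) *)
Definition gact (p : {poly R}) (s : A -> A) (x : A) : A :=
  \sum_(i < size p) p`_i *: iter i s x.

Definition torsion_free : Prop :=
  forall (c : R) (x : A), c *: x = 0 -> c = 0 \/ x = 0.

Definition fin_gen_group_ring (s : A -> A) : Prop :=
  exists g : seq A, forall x : A, exists p : nat -> {poly R},
      x = \sum_(i < size g) gact (p i) s (g`_i).

Definition trH (n : nat) (s : A -> A) (x : A) : A := x + iter (2 ^ n.-1) s x.
Definition fixedH (n : nat) (s : A -> A) (x : A) : Prop := iter (2 ^ n.-1) s x = x.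

Definition inN (n : nat) (s : A -> A) (y : A) : Prop :=
  exists a z : A, fixedH n s z /\ y = (s (trH n s a) - trH n s a) + 2%:R *: z.

(* the images of Tr_H b_i in Q = Tr_H A / N form an (R/2R)-basis of Q *)
Definition Q_basis (n : nat) (s : A -> A) (r : nat) (b : 'I_r -> A) : Prop :=
  (forall a : A, exists c : 'I_r -> R,
      inN n s (trH n s a - \sum_(i < r) c i *: trH n s (b i))) /\
  (forall c : 'I_r -> R, inN n s (\sum_(i < r) c i *: trH n s (b i)) ->
      forall i, exists d : R, c i = 2%:R * d).

(* the images of f_j in A / A^H form a basis over
   Lambda = R[C_{2^n}]/<Tr_H> = R[X] / (X^(2^n) - 1, 1 + X^(2^(n-1))) *)
Definition Lambda_basis (n : nat) (s : A -> A) (m : nat) (f : 'I_m -> A) : Prop :=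
  (forall x : A, exists l : 'I_m -> {poly R},
      fixedH n s (x - \sum_(j < m) gact (l j) s (f j))) /\
  (forall l : 'I_m -> {poly R}, fixedH n s (\sum_(j < m) gact (l j) s (f j)) ->
      forall j, exists q1 q2 : {poly R},
        l j = q1 * ('X^(2 ^ n) - 1) + q2 * (1 + 'X^(2 ^ n.-1))).

End ModuleDefs.

Definition cat_fam (T : Type) (r m : nat) (b : 'I_r -> T) (e : 'I_m -> T)
  (i : 'I_(r + m)) : T :=
  match split i with inl i' => b i' | inr j => e j end.

(* Main.v *)
Require Import Defs.
From HB Require Import structures.
From mathcomp Require Import all_boot all_order all_algebra.
From Stdlib Require Import Classical.
From mathcomp Require Import ring zify.
Set Implicit Arguments. Unset Strict Implicit. Unset Printing Implicit Defensive.
Import Order.TTheory GRing.Theory Num.Theory.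
Local Open Scope ring_scope.


Section Gact.
Variables (R : idomainType) (A : lmodType R) (s : {linear A -> A}).

Lemma iterD0 i : iter i s 0 = 0.
Proof. by elim: i => //= i ->; rewrite linear0. Qed.
Lemma iterDD i x y : iter i s (x + y) = iter i s x + iter i s y.
Proof. by elim: i => //= i ->; rewrite linearD. Qed.
Lemma iterDZ i c x : iter i s (c *: x) = c *: iter i s x.
Proof. by elim: i => //= i ->; rewrite linearZ. Qed.
Lemma iterDN i x : iter i s (- x) = - iter i s x.
Proof. by rewrite -scaleN1r iterDZ scaleN1r. Qed.
Lemma iterDB i x y : iter i s (x - y) = iter i s x - iter i s y.
Proof. by rewrite iterDD iterDN. Qed.
Lemma iterD_sum i (I : Type) (r : seq I) (P : pred I) (F : I -> A) :
  iter i s (\sum_(j <- r | P j) F j) = \sum_(j <- r | P j) iter i s (F j).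
Proof. by apply: (big_morph _ (iterDD i) (iterD0 i)). Qed.
Lemma iter_s i x : iter i s (s x) = s (iter i s x).
Proof. by rewrite -iterSr. Qed.

Lemma gactE (p : {poly R}) N x : (size p <= N)%N ->
  gact p s x = \sum_(i < N) p`_i *: iter i s x.
Proof.
move=> hN; rewrite /gact (big_ord_widen _ (fun i => p`_i *: iter i s x) hN).
rewrite big_mkcond /=; apply: eq_bigr => i _.
by case: ifP => // /negbT; rewrite -leqNgt => h; rewrite nth_default // scale0r.
Qed.

Lemma gact_addp p q x : gact (p + q) s x = gact p s x + gact q s x.
Proof.
rewrite !(@gactE _ (size p + size q)) ?leq_addr ?leq_addl //; last first.
  by rewrite (leq_trans (size_polyD _ _)) // geq_max leq_addr leq_addl.
by rewrite -big_split; apply: eq_bigr => i _; rewrite coefD scalerDl.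
Qed.

Lemma gact_scalep c p x : gact (c *: p) s x = c *: gact p s x.
Proof.
rewrite !(@gactE _ (size p)) ?size_scale_leq //.
by rewrite scaler_sumr; apply: eq_bigr => i _; rewrite coefZ scalerA.
Qed.

Lemma gact_C c x : gact c%:P s x = c *: x.
Proof.
by rewrite (@gactE _ 1) ?size_polyC ?leq_b1 // big_ord1 coefC /=.
Qed.

Lemma gact_0p x : gact 0 s x = 0.
Proof. by rewrite (@gactE _ 0) ?size_poly0 // big_ord0. Qed.

Lemma gact_1 x : gact 1 s x = x.
Proof. by rewrite -polyC1 gact_C scale1r. Qed.

Lemma gact_MX p x : gact (p * 'X) s x = gact p s (s x).
Proof.
rewrite (@gactE _ (size p).+1); last first.
  by rewrite (leq_trans (size_mul_leq _ _)) // size_polyX addn2.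
rewrite big_ord_recl coefMX /= scale0r add0r /gact.
by apply: eq_bigr => i _; rewrite coefMX /= add0n iter_s.
Qed.

Lemma gact_s p x : gact p s (s x) = s (gact p s x).
Proof.
rewrite /gact linear_sum; apply: eq_bigr => i _.
by rewrite linearZ /= iter_s.
Qed.

Lemma gact_iter p i x : gact p s (iter i s x) = iter i s (gact p s x).
Proof.
by rewrite /gact iterD_sum; apply: eq_bigr => j _; rewrite iterDZ -!iterD addnC.
Qed.

Lemma gact_D p x y : gact p s (x + y) = gact p s x + gact p s y.
Proof.
by rewrite /gact -big_split; apply: eq_bigr => i _; rewrite iterDD scalerDr.
Qed.
Lemma gact_Z p c x : gact p s (c *: x) = c *: gact p s x.
Proof.
rewrite /gact scaler_sumr; apply: eq_bigr => i _.
by rewrite iterDZ !scalerA mulrC.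
Qed.
Lemma gact_x0 p : gact p s 0 = 0.
Proof. by rewrite /gact big1 // => i _; rewrite iterD0 scaler0. Qed.
Lemma gact_N p x : gact p s (- x) = - gact p s x.
Proof. by rewrite -scaleN1r gact_Z scaleN1r. Qed.
Lemma gact_B p x y : gact p s (x - y) = gact p s x - gact p s y.
Proof. by rewrite gact_D gact_N. Qed.
Lemma gact_sum p (I : Type) (r : seq I) (P : pred I) (F : I -> A) :
  gact p s (\sum_(j <- r | P j) F j) = \sum_(j <- r | P j) gact p s (F j).
Proof. exact: (big_morph (gact p s) (gact_D p) (gact_x0 p)). Qed.

Lemma gact_mul p q x : gact (p * q) s x = gact p s (gact q s x).
Proof.
elim/poly_ind: p x => [|p c IH] x; first by rewrite mul0r !gact_0p.
rewrite mulrDl mulrAC gact_addp gact_MX IH mul_polyC gact_scalep.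
by rewrite gact_addp gact_MX gact_C gact_s.
Qed.

Lemma gact_X x : gact 'X s x = s x.
Proof. by rewrite -(mul1r 'X) gact_MX gact_1. Qed.

Lemma gact_Xn k x : gact 'X^k s x = iter k s x.
Proof.
elim: k x => [|k IH] x; first by rewrite expr0 gact_1.
by rewrite exprSr gact_MX IH iterSr.
Qed.

Lemma gact_subp p q x : gact (p - q) s x = gact p s x - gact q s x.
Proof.
rewrite gact_addp (_ : - q = (-1) *: q); last by rewrite scaleN1r.
by rewrite gact_scalep scaleN1r.
Qed.

End Gact.


Section RingFacts.
Variables (R : idomainType).
Hypothesis hU : unramified_Z2_integers R.

Definition dv2 (c : R) := exists d, c = 2%:R * d.

Lemma two_neq0 : (2%:R : R) != 0.
Proof. by case: hU. Qed.
Lemma two_nunit : (2%:R : R) \isn't a GRing.unit.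
Proof. by case: hU. Qed.

Lemma nd2_unit (c : R) : ~ dv2 c -> c \is a GRing.unit.
Proof.
move=> nd; case: hU => _ _ hf _ _.
have c0 : c != 0 by apply/eqP => c0; apply: nd; exists 0; rewrite c0 mulr0.
have [u [[|k] [uu ce]]] := hf c c0; first by rewrite ce expr0 mulr1.
by exfalso; apply: nd; exists (u * 2%:R ^+ k); rewrite ce exprS; ring.
Qed.

Lemma inter0 (x : R) : (forall m, exists d, x = 2%:R ^+ m * d) -> x = 0.
Proof.
move=> h; apply/eqP; apply/negPn/negP => x0.
case: hU => _ nu hf _ _.
have [u [k [uu xe]]] := hf x x0.
have [d hd] := h k.+1.
have : u = 2%:R * d.
  apply: (@mulIf _ (2%:R ^+ k)); first by rewrite expf_neq0 // two_neq0.
  by rewrite -xe hd exprSr; ring.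
move=> ue; move: uu; rewrite ue unitrM => /andP [h2 _].
by move/negP: nu; apply.
Qed.

Definition cg2 (a b : R) := dv2 (a - b).

Lemma cg2_add (a b c d : R) : cg2 a b -> cg2 c d -> cg2 (a + c) (b + d).
Proof. by move=> [x hx] [y hy]; exists (x + y); rewrite mulrDr -hx -hy; ring. Qed.
Lemma cg2_mul (a b c d : R) : cg2 a b -> cg2 c d -> cg2 (a * c) (b * d).
Proof.
move=> [x hx] [y hy]; exists (x * c + b * y).
rewrite mulrDr mulrA -hx mulrCA -hy; ring.
Qed.
Lemma cg2_refl (a : R) : cg2 a a.
Proof. by exists 0; rewrite subrr mulr0. Qed.

Lemma cg2_sub2 (a b : R) : cg2 (a - 2%:R * b) a.
Proof. by exists (- b); ring. Qed.

Lemma det_cg2 p (M : 'M[R]_p) : cg2 (\det (1%:M - 2%:R *: M)) 1.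
Proof.
suff : cg2 (\det (1%:M - 2%:R *: M)) (\det (1%:M : 'M[R]_p)) by rewrite det1.
rewrite /determinant.
apply: (big_ind2 cg2); [exact: cg2_refl | exact: cg2_add |] => sg _.
apply: cg2_mul; first exact: cg2_refl.
apply: (big_ind2 cg2); [exact: cg2_refl | exact: cg2_mul |] => i _.
by rewrite !mxE; apply: cg2_sub2.
Qed.

Lemma det_unit p (M : 'M[R]_p) : \det (1%:M - 2%:R *: M) \is a GRing.unit.
Proof.
apply: nd2_unit => -[d hd]; have [e he] := det_cg2 M.
move: he; rewrite hd => he.
have : (1 : R) = 2%:R * (d - e) by rewrite mulrBr -he; ring.
move=> h1; move/negP: two_nunit; apply.
by apply/unitrPr; exists (d - e); rewrite -h1.
Qed.

End RingFacts.


Section LinAlg.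
Variables (R : idomainType) (A : lmodType R).
Hypothesis hU : unramified_Z2_integers R.
Variable Pm : A -> Prop.
Hypothesis Pm0 : Pm 0.
Hypothesis PmD : forall x y, Pm x -> Pm y -> Pm (x + y).
Hypothesis PmZ : forall (c : R) x, Pm x -> Pm (c *: x).

Lemma PmN x : Pm x -> Pm (- x).
Proof. by move=> h; rewrite -scaleN1r; apply: PmZ. Qed.
Lemma PmB x y : Pm x -> Pm y -> Pm (x - y).
Proof. by move=> hx hy; apply: PmD => //; apply: PmN. Qed.
Lemma Pm_sum (I : Type) (r : seq I) (P : pred I) (F : I -> A) :
  (forall i, P i -> Pm (F i)) -> Pm (\sum_(i <- r | P i) F i).
Proof. by move=> h; apply: big_ind => //. Qed.

Variables (r p : nat) (v : 'I_r -> A) (w : 'I_p -> A).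
Hypothesis Pm2w : forall k, Pm (2%:R *: w k).

Definition comb (d : 'I_r -> R) (S : {set 'I_p}) (c : 'I_p -> R) :=
  \sum_(i < r) d i *: v i + \sum_(k in S) c k *: w k.

Definition indepS (S : {set 'I_p}) :=
  forall (d : 'I_r -> R) (c : 'I_p -> R), Pm (comb d S c) ->
    (forall i, dv2 (d i)) /\ (forall k, k \in S -> dv2 (c k)).

Definition inspan (S : {set 'I_p}) x :=
  exists d c, Pm (x - comb d S c).

Lemma maximal_indep : indepS set0 ->
  exists S, indepS S /\ forall k, k \notin S -> ~ indepS (k |: S).
Proof.
move=> h0.
suff H : forall m (S : {set 'I_p}), (p - #|S| <= m)%N -> indepS S ->
   exists S', indepS S' /\ forall k, k \notin S' -> ~ indepS (k |: S').
  by apply: (H p set0) => //; rewrite leq_subr.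
have cardS : forall (S : {set 'I_p}) k, k \notin S -> (#|S| < p)%N.
  move=> S k kS; have := max_card (mem (k |: S)); rewrite card_ord cardsU1 kS.
  by move=> h; apply: leq_trans h.
elim=> [|m IH] S hm hS.
  exists S; split => // k kS.
  by have := cardS S k kS; lia.
case: (classic (forall k, k \notin S -> ~ indepS (k |: S))) => h.
  by exists S.
have [k hk0] := not_all_ex_not _ _ h.
have [kS hk] := imply_to_and _ _ hk0.
move/NNPP: hk => hk.
apply: (IH _ _ hk); rewrite cardsU1 kS.
by have := cardS S k kS; lia.
Qed.

Lemma span_of_max (S : {set 'I_p}) k : indepS S -> k \notin S -> ~ indepS (k |: S) ->
  inspan S (w k).
Proof.
move=> hS kS nk.
have [d hd] := not_all_ex_not _ _ nk.
have [c hc] := not_all_ex_not _ _ hd.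
have [hP hn] := imply_to_and _ _ hc.
have e1 : comb d (k |: S) c = c k *: w k + comb d S c.
  by rewrite /comb big_setU1 //= addrCA.
rewrite e1 in hP.
case: (classic (dv2 (c k))) => [[e he]|nck].
  exfalso; apply: hn.
  have hP' : Pm (comb d S c).
    have -> : comb d S c = (c k *: w k + comb d S c) - e *: (2%:R *: w k).
      by rewrite scalerA mulrC -he [c k *: _ + _]addrC addrK.
    by apply: PmB => //; apply: PmZ.
  have [h1 h2] := hS d c hP'; split => // j; rewrite in_setU1 => /orP [/eqP ->|];
    [by exists e | exact: h2].
have uk := nd2_unit hU nck.
exists (fun i => - ((c k)^-1 * d i)), (fun j => - ((c k)^-1 * c j)).
have -> : w k - comb (fun i => - ((c k)^-1 * d i)) S (fun j => - ((c k)^-1 * c j))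
  = (c k)^-1 *: (c k *: w k + comb d S c).
  rewrite /comb scalerDr scalerA mulVr // scale1r scalerDr !scaler_sumr.
  rewrite opprD; congr (_ + (_ + _)); rewrite -sumrN; apply: eq_bigr => i _;
  by rewrite scaleNr opprK scalerA.
exact: PmZ.
Qed.

Lemma inspan0 (S : {set 'I_p}) : inspan S 0.
Proof.
exists (fun _ => 0), (fun _ => 0); rewrite /comb !big1 ?addr0 ?subrr // => i _;
by rewrite scale0r.
Qed.

Lemma inspanD (S : {set 'I_p}) x y : inspan S x -> inspan S y -> inspan S (x + y).
Proof.
move=> [d1 [c1 h1]] [d2 [c2 h2]].
exists (fun i => d1 i + d2 i), (fun j => c1 j + c2 j).
have -> : x + y - comb (fun i => d1 i + d2 i) S (fun j => c1 j + c2 j)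
  = (x - comb d1 S c1) + (y - comb d2 S c2).
  rewrite /comb.
  have -> : \sum_(i < r) (d1 i + d2 i) *: v i =
     \sum_(i < r) d1 i *: v i + \sum_(i < r) d2 i *: v i.
    by rewrite -big_split; apply: eq_bigr => i _; rewrite scalerDl.
  have -> : \sum_(j in S) (c1 j + c2 j) *: w j =
     \sum_(j in S) c1 j *: w j + \sum_(j in S) c2 j *: w j.
    by rewrite -big_split; apply: eq_bigr => i _; rewrite scalerDl.
  set a1 := \sum_(i < r) _; set a2 := \sum_(i < r) _.
  set b1 := \sum_(j in S) _; set b2 := \sum_(j in S) _.
  by rewrite [RHS]addrACA -opprD (addrACA a1).
exact: PmD.
Qed.

Lemma inspanZ (S : {set 'I_p}) a x : inspan S x -> inspan S (a *: x).
Proof.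
move=> [d [c h]]; exists (fun i => a * d i), (fun j => a * c j).
have -> : a *: x - comb (fun i => a * d i) S (fun j => a * c j)
   = a *: (x - comb d S c).
  rewrite /comb scalerBr scalerDr !scaler_sumr; congr (_ - (_ + _));
  by apply: eq_bigr => i _; rewrite scalerA.
exact: PmZ.
Qed.

Lemma inspan_sum (S : {set 'I_p}) (I : Type) (l : seq I) (P : pred I) (F : I -> A) :
  (forall i, P i -> inspan S (F i)) -> inspan S (\sum_(i <- l | P i) F i).
Proof. move=> h; apply: big_ind => //; [exact: inspan0 | exact: inspanD]. Qed.

Lemma inspan_Pm (S : {set 'I_p}) x : Pm x -> inspan S x.
Proof.
move=> hx; exists (fun _ => 0), (fun _ => 0).
by rewrite /comb !big1 ?addr0 ?subr0 // => i _; rewrite scale0r.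
Qed.

Lemma inspan_v (S : {set 'I_p}) i : inspan S (v i).
Proof.
exists (fun j => (j == i)%:R), (fun _ => 0).
rewrite /comb [\sum_(k in S) _]big1 ?addr0; last by move=> j _; rewrite scale0r.
rewrite (bigD1 i) //= eqxx scale1r big1 ?addr0 ?subrr // => j /negbTE ->.
by rewrite scale0r.
Qed.

Lemma inspan_w (S : {set 'I_p}) k : k \in S -> inspan S (w k).
Proof.
move=> kS; exists (fun _ => 0), (fun j => (j == k)%:R).
rewrite /comb big1 ?add0r; last by move=> j _; rewrite scale0r.
rewrite (bigD1 k) //= eqxx scale1r big1 ?addr0 ?subrr // => j /andP [_ /negbTE ->].
by rewrite scale0r.
Qed.

Theorem extend_basis : indepS set0 ->
  exists S, indepS S /\ forall k, inspan S (w k).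
Proof.
move=> h0; have [S [hS hmax]] := maximal_indep h0.
exists S; split => // k; case: (boolP (k \in S)) => kS.
  exact: inspan_w.
by apply: span_of_max => //; apply: hmax.
Qed.

End LinAlg.

Lemma cat_fam_l (T : Type) r m (b : 'I_r -> T) (e : 'I_m -> T) i :
  cat_fam b e (lshift m i) = b i.
Proof. by rewrite /cat_fam -[lshift m i]/(unsplit (inl i : 'I_r + 'I_m)) unsplitK. Qed.
Lemma cat_fam_r (T : Type) r m (b : 'I_r -> T) (e : 'I_m -> T) j :
  cat_fam b e (rshift r j) = e j.
Proof. by rewrite /cat_fam -[rshift r j]/(unsplit (inr j : 'I_r + 'I_m)) unsplitK. Qed.

Section Conv.
Variables (R : idomainType) (A : lmodType R).
Hypothesis hU : unramified_Z2_integers R.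
Variable Pm : A -> Prop.
Hypothesis Pm0 : Pm 0.
Hypothesis PmD : forall x y, Pm x -> Pm y -> Pm (x + y).
Hypothesis PmZ : forall (c : R) x, Pm x -> Pm (c *: x).
Variables (r p : nat) (v : 'I_r -> A) (w : 'I_p -> A) (S : {set 'I_p}).

Definition ef (j : 'I_#|S|) := w (enum_val j).
Definition liftc (c : 'I_#|S| -> R) (k : 'I_p) : R :=
  if [pick j | enum_val j == k] is Some j then c j else 0.

Lemma liftcE c j : liftc c (enum_val j) = c j.
Proof.
rewrite /liftc; case: pickP => [j' /eqP /enum_val_inj -> //|].
by move/(_ j); rewrite eqxx.
Qed.

Lemma sumS (c : 'I_p -> R) :
  \sum_(k in S) c k *: w k = \sum_(j < #|S|) c (enum_val j) *: ef j.
Proof. by rewrite big_enum_val. Qed.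

Lemma fam_sum (c : 'I_(r + #|S|) -> R) :
  \sum_i c i *: cat_fam v ef i =
  comb v w (fun i => c (lshift #|S| i)) S (liftc (fun j => c (rshift r j))).
Proof.
rewrite big_split_ord /comb sumS; congr (_ + _); apply: eq_bigr => i _.
  by rewrite cat_fam_l.
by rewrite cat_fam_r liftcE.
Qed.

Definition unc (d : 'I_r -> R) (c : 'I_p -> R) (i : 'I_(r + #|S|)) : R :=
  match split i with inl i' => d i' | inr j => c (enum_val j) end.

Lemma comb_fam d c : comb v w d S c = \sum_i unc d c i *: cat_fam v ef i.
Proof.
rewrite big_split_ord /comb sumS; congr (_ + _); apply: eq_bigr => i _.
  by rewrite cat_fam_l /unc -[lshift _ i]/(unsplit (inl i : 'I_r + 'I_#|S|)) unsplitK.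
by rewrite cat_fam_r /unc -[rshift r i]/(unsplit (inr i : 'I_r + 'I_#|S|)) unsplitK.
Qed.

Lemma fam_indep : indepS Pm v w S ->
  forall c : 'I_(r + #|S|) -> R, Pm (\sum_i c i *: cat_fam v ef i) ->
  forall i, dv2 (c i).
Proof.
move=> hS c; rewrite fam_sum => /hS [h1 h2] i.
rewrite -(splitK i); case: (split i) => [i'|j] /=.
  exact: h1.
by rewrite -(liftcE (fun j => c (rshift r j))); apply: h2; apply: enum_valP.
Qed.

Lemma fam_span x : inspan Pm v w S x ->
  exists c : 'I_(r + #|S|) -> R, Pm (x - \sum_i c i *: cat_fam v ef i).
Proof. by move=> [d [c h]]; exists (unc d c); rewrite -comb_fam. Qed.

End Conv.


Section Polys.
Variables (R : idomainType).
Hypothesis hU : unramified_Z2_integers R.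

Lemma Xm1_pow j : exists g : {poly R},
  ('X - 1) ^+ (2 ^ j) = 1 + 'X^(2 ^ j) + 2%:R * g.
Proof.
elim: j => [|j [g hg]]; first by exists (-1); rewrite expn0 !expr1; ring.
exists ('X^(2 ^ j) + 2%:R * g * (1 + 'X^(2 ^ j)) + 2%:R * g ^+ 2).
rewrite expnSr exprM hg exprM.
set Y := 'X^(2 ^ j); ring.
Qed.

Lemma Phi_pow (P g : {poly R}) m : exists h, (P + 2%:R * g) ^+ m = P * h + 2%:R ^+ m * g ^+ m.
Proof.
elim: m => [|m [h hh]]; first by exists 0; rewrite !expr0; ring.
exists (h * (P + 2%:R * g) + 2%:R ^+ m * g ^+ m).
by rewrite exprS hh !exprS; ring.
Qed.

Lemma coef_2X (m : nat) (a : {poly R}) i : (2%:R ^+ m * a)`_i = 2%:R ^+ m * a`_i.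
Proof. by rewrite -!natrX !mulr_natl coefMn. Qed.

Lemma div_Phi (P l : {poly R}) : P \is monic ->
  (forall m, exists a b, l = 2%:R ^+ m * a + b * P) -> exists q, l = q * P.
Proof.
move=> mP h.
have P0 : P != 0 := monic_neq0 mP.
have small : forall q : {poly R}, (size (q * P)%R < size P)%N -> q = 0.
  move=> q; case: (eqVneq q 0) => // q0; rewrite size_mul // => hs.
  have : (0 < size q)%N by rewrite size_poly_gt0.
  by move: hs; lia.
exists (l %/ P).
have el := Pdiv.IdomainMonic.divp_eq mP l.
suff r0 : l %% P = 0 by rewrite {1}el r0 addr0.
apply/polyP => i; rewrite coef0.
apply: (inter0 hU) => m.
have [a [b hab]] := h m.
have ea := Pdiv.IdomainMonic.divp_eq mP a.
have e2 : l %% P - 2%:R ^+ m * (a %% P) = (b + 2%:R ^+ m * (a %/ P) - l %/ P) * P.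
  have : l %% P = l - l %/ P * P by apply/eqP; rewrite eq_sym subr_eq addrC -el.
  move=> ->; rewrite {1}hab {1}ea; ring.
have z : b + 2%:R ^+ m * (a %/ P) - l %/ P = 0.
  apply: small; rewrite -e2 (leq_ltn_trans (size_polyD _ _)) // gtn_max.
  rewrite ltn_modp P0 /= size_polyN (leq_ltn_trans _ (_ : size (a %% P)%R < size P)%N) //.
    by rewrite -natrX mulr_natl -scaler_nat size_scale_leq.
  by rewrite ltn_modp.
move: e2; rewrite z mul0r => /eqP; rewrite subr_eq0 => /eqP ->.
by exists (a %% P)`_i; rewrite coef_2X.
Qed.

End Polys.


Section Main.
Variables (R : idomainType) (A : lmodType R) (n : nat) (s : {linear A -> A}).
Hypothesis hU : unramified_Z2_integers R.
Hypothesis n0 : (0 < n)%N.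
Hypothesis hper : iter (2 ^ n) s =1 id.
Hypothesis htf : torsion_free A.

Local Notation K := (2 ^ n.-1)%N.
Local Notation FH := (fixedH n s).
Local Notation tr := (trH n s).

Lemma twoK : (2 ^ n = K + K)%N.
Proof. by rewrite -{1}(prednK n0) expnS mul2n -addnn. Qed.

Lemma iterKK x : iter K s (iter K s x) = x.
Proof. by rewrite -iterD -twoK hper. Qed.

Lemma iter_mul q x : iter (q * 2 ^ n) s x = x.
Proof. by elim: q => [|q IH] //; rewrite mulSn iterD IH hper. Qed.

Lemma iter_mod i x : iter i s x = iter (i %% 2 ^ n) s x.
Proof. by rewrite {1}(divn_eq i (2 ^ n)) addnC iterD iter_mul. Qed.

Lemma FH0 : FH 0.
Proof. by rewrite /fixedH iterD0. Qed.
Lemma FHD x y : FH x -> FH y -> FH (x + y).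
Proof. by rewrite /fixedH iterDD => -> ->. Qed.
Lemma FHZ c x : FH x -> FH (c *: x).
Proof. by rewrite /fixedH iterDZ => ->. Qed.
Lemma FHN x : FH x -> FH (- x).
Proof. by rewrite /fixedH iterDN => ->. Qed.
Lemma FHB x y : FH x -> FH y -> FH (x - y).
Proof. by move=> hx hy; apply: FHD => //; apply: FHN. Qed.
Lemma FH_sum (I : Type) (l : seq I) (P : pred I) (F : I -> A) :
  (forall i, P i -> FH (F i)) -> FH (\sum_(i <- l | P i) F i).
Proof. by move=> h; apply: big_ind => //; [exact: FH0 | exact: FHD]. Qed.
Lemma FH_s x : FH x -> FH (s x).
Proof. by rewrite /fixedH iter_s => ->. Qed.
Lemma FH_gact p x : FH x -> FH (gact p s x).
Proof. by rewrite /fixedH -gact_iter => ->. Qed.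

Lemma tr_FH x : FH (tr x).
Proof. by rewrite /fixedH /trH iterDD iterKK addrC. Qed.
Lemma trD x y : tr (x + y) = tr x + tr y.
Proof. by rewrite /trH iterDD addrACA. Qed.
Lemma trZ c x : tr (c *: x) = c *: tr x.
Proof. by rewrite /trH iterDZ scalerDr. Qed.
Lemma tr0 : tr 0 = 0.
Proof. by rewrite /trH iterD0 addr0. Qed.
Lemma trN x : tr (- x) = - tr x.
Proof. by rewrite -scaleN1r trZ scaleN1r. Qed.
Lemma trB x y : tr (x - y) = tr x - tr y.
Proof. by rewrite trD trN. Qed.
Lemma tr_sum (I : Type) (l : seq I) (P : pred I) (F : I -> A) :
  tr (\sum_(i <- l | P i) F i) = \sum_(i <- l | P i) tr (F i).
Proof. exact: (big_morph tr trD tr0). Qed.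
Lemma tr_s x : tr (s x) = s (tr x).
Proof. by rewrite /trH iter_s linearD. Qed.
Lemma tr_fixed h : FH h -> tr h = 2%:R *: h.
Proof. by rewrite /trH => ->; rewrite scaler_nat mulr2n. Qed.

Definition Phi : {poly R} := 1 + 'X^K.
Lemma gact_Phi x : gact Phi s x = tr x.
Proof. by rewrite /Phi gact_addp gact_1 gact_Xn. Qed.

Lemma FH_sub1 y : FH (s y - y) -> FH y.
Proof.
rewrite /fixedH iterDB iter_s => h.
set w := iter K s y - y.
have sw : s w = w.
  have ha : s (iter K s y) = s y - y + iter K s y by rewrite -h subrK.
  by rewrite /w linearB /= ha addrAC (addrC (s y)) addrK addrC.
have iw : forall i, iter i s w = w by elim=> //= i ->.
have : iter K s w = - w by rewrite /w iterDB iterKK opprB.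
rewrite iw => /eqP; rewrite -subr_eq0 opprK => h2.
have h3 : (2%:R : R) *: w = 0 by rewrite scaler_nat mulr2n (eqP h2).
case: (htf h3) => [/eqP|]; first by rewrite (negbTE (two_neq0 hU)).
by move/eqP; rewrite subr_eq0 => /eqP.
Qed.


Definition Vp (y : A) := exists a h, FH h /\ y = s a - a + h.

Lemma gact_2 (g : {poly R}) x : gact (2%:R * g) s x = 2%:R *: gact g s x.
Proof. by rewrite mulr_natl mulr2n gact_addp scaler_nat mulr2n. Qed.

Lemma gact_Xm1 x : gact ('X - 1) s x = s x - x.
Proof. by rewrite gact_subp gact_X gact_1. Qed.

Lemma Phi_monic : Phi \is monic.
Proof. by rewrite /Phi addrC -polyC1 monicXnaddC // expn_gt0. Qed.

Section LSpan.
Variables (q : nat) (f : 'I_q -> A).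
Hypothesis hVspan : forall x, exists c : 'I_q -> R, Vp (x - \sum_i c i *: f i).
Variable U : seq A.
Hypothesis hUs : forall x, exists c : 'I_(size U) -> R, x = \sum_k c k *: U`_k.

Definition PP x := exists l : 'I_q -> {poly R}, FH (x - \sum_j gact (l j) s (f j)).

Lemma PP_FH x : FH x -> PP x.
Proof.
move=> hx; exists (fun _ => 0); rewrite big1 ?subr0 // => j _; exact: gact_0p.
Qed.
Lemma PP0 : PP 0.
Proof. exact: PP_FH FH0. Qed.
Lemma PPD x y : PP x -> PP y -> PP (x + y).
Proof.
move=> [l1 h1] [l2 h2]; exists (fun j => l1 j + l2 j).
have -> : x + y - \sum_j gact (l1 j + l2 j) s (f j) =
   (x - \sum_j gact (l1 j) s (f j)) + (y - \sum_j gact (l2 j) s (f j)).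
  rewrite (eq_bigr (fun j => gact (l1 j) s (f j) + gact (l2 j) s (f j)));
    last by move=> j _; rewrite gact_addp.
  by rewrite big_split /= [RHS]addrACA -opprD.
exact: FHD.
Qed.
Lemma PPZ c x : PP x -> PP (c *: x).
Proof.
move=> [l h]; exists (fun j => c *: l j).
have -> : c *: x - \sum_j gact (c *: l j) s (f j) =
   c *: (x - \sum_j gact (l j) s (f j)).
  rewrite scalerBr scaler_sumr; congr (_ - _); apply: eq_bigr => j _.
  by rewrite gact_scalep.
exact: FHZ.
Qed.
Lemma PPB x y : PP x -> PP y -> PP (x - y).
Proof. by move=> hx hy; apply: PPD => //; rewrite -scaleN1r; apply: PPZ. Qed.
Lemma PP_sum (I : Type) (l : seq I) (P : pred I) (F : I -> A) :
  (forall i, P i -> PP (F i)) -> PP (\sum_(i <- l | P i) F i).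
Proof. by move=> h; apply: big_ind => //; [exact: PP0 | exact: PPD]. Qed.
Lemma PP_gact p x : PP x -> PP (gact p s x).
Proof.
move=> [l h]; exists (fun j => p * l j).
have -> : gact p s x - \sum_j gact (p * l j) s (f j) =
   gact p s (x - \sum_j gact (l j) s (f j)).
  rewrite gact_B gact_sum; congr (_ - _); apply: eq_bigr => j _.
  by rewrite gact_mul.
exact: FH_gact.
Qed.

Lemma step1 x : exists y, PP (x - (s y - y)).
Proof.
have [c [a [h [hh e]]]] := hVspan x.
exists a; exists (fun j => (c j)%:P).
have -> : x - (s a - a) - \sum_j gact (c j)%:P s (f j) = h.
  rewrite (eq_bigr (fun j => c j *: f j)); last by move=> j _; rewrite gact_C.
  by rewrite addrAC e addrAC subrr add0r.
exact: hh.
Qed.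

Lemma step2 k x : exists y, PP (x - gact (('X - 1) ^+ k) s y).
Proof.
elim: k x => [|k IH] x.
  by exists x; rewrite expr0 gact_1 subrr; exact: PP0.
have [y hy] := IH x.
have [y' hy'] := step1 y.
exists y'.
have -> : x - gact (('X - 1) ^+ k.+1) s y' = (x - gact (('X - 1) ^+ k) s y)
   + gact (('X - 1) ^+ k) s (y - (s y' - y')).
  rewrite exprSr gact_mul gact_Xm1; set z := s y' - y'.
  by rewrite [gact _ s (y - z)]gact_B addrA subrK.
apply: PPD => //; exact: PP_gact.
Qed.

Lemma step3 x : exists z, PP (x - 2%:R *: z).
Proof.
have [g hg] := Xm1_pow R n.-1.
have [y hy] := step2 K x.
exists (gact g s y).
have -> : x - 2%:R *: gact g s y = (x - gact (('X - 1) ^+ K) s y) + tr y.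
  rewrite hg gact_addp gact_2 -/Phi gact_Phi; move: (trH n s y) => t.
  by rewrite opprD addrA addrAC subrK.
apply: PPD => //; apply: PP_FH; exact: tr_FH.
Qed.

Lemma lambda_span x : PP x.
Proof.
pose p := size U; pose u (k : 'I_p) := U`_k.
have hz : forall k : 'I_p, exists a : 'I_p -> R,
    PP (u k - 2%:R *: \sum_l a l *: u l).
  move=> k; have [z hz] := step3 (u k); have [a ha] := hUs z.
  by exists a; rewrite -ha.
have [a ha] := fin_all_exists hz.
pose B : 'M[R]_p := 1%:M - 2%:R *: \matrix_(k, l) a k l.
have hB : forall k, PP (\sum_l B k l *: u l).
  move=> k; have -> : \sum_l B k l *: u l = u k - 2%:R *: \sum_l a k l *: u l.
    rewrite /B (eq_bigr (fun l => (1%:M : 'M[R]_p) k l *: u l - (2%:R * a k l) *: u l));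
      last by move=> l _; rewrite !mxE scalerBl.
    rewrite sumrB scaler_sumr; congr (_ - _).
      rewrite (bigD1 k) //= mxE eqxx scale1r big1 ?addr0 // => l /negbTE.
      by rewrite mxE eq_sym => ->; rewrite scale0r.
    by apply: eq_bigr => l _; rewrite scalerA.
  exact: ha.
have hu : forall j, PP (u j).
  move=> j.
  have e : \det B *: u j = \sum_k (\adj B) j k *: \sum_l B k l *: u l.
    have := congr1 (fun M : 'M[R]_p => \sum_l M j l *: u l) (mul_adj_mx B).
    have e1 : \sum_l (\det B)%:M j l *: u l = \det B *: u j.
      rewrite (bigD1 j) //= mxE eqxx mulr1n big1 ?addr0 // => l /negbTE.
      by rewrite mxE eq_sym => ->; rewrite mulr0n scale0r.
    rewrite /= e1 => <-.
    rewrite (eq_bigr (fun l => \sum_k (\adj B j k * B k l) *: u l)); last first.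
      by move=> l _; rewrite mxE scaler_suml.
    rewrite exchange_big /=; apply: eq_bigr => k _.
    by rewrite scaler_sumr; apply: eq_bigr => l _; rewrite scalerA.
  have dU := det_unit hU (\matrix_(k, l) a k l).
  have -> : u j = (\det B)^-1 *: (\det B *: u j) by rewrite scalerA mulVr // scale1r.
  apply: PPZ; rewrite e; apply: PP_sum => k _; exact: PPZ.
have [c ->] := hUs x.
by apply: PP_sum => k _; apply: PPZ; exact: hu.
Qed.

End LSpan.

Section LIndep.
Variables (q : nat) (f : 'I_q -> A).
Hypothesis hVindep : forall c : 'I_q -> R, Vp (\sum_i c i *: f i) -> forall i, dv2 (c i).

Lemma root1 (p : {poly R}) : exists t, p = t * ('X - 1) + (p.[1])%:P.
Proof.
have : root (p - (p.[1])%:P) 1 by rewrite rootE !hornerE subrr.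
move/factor_theorem => [t ht]; exists t; rewrite -polyC1 -ht; ring.
Qed.

Lemma indep1 (l : 'I_q -> {poly R}) : FH (\sum_j gact (l j) s (f j)) ->
  exists mu : 'I_q -> {poly R},
    (forall j, exists nu, l j = ('X - 1) * mu j + nu * Phi) /\
    FH (\sum_j gact (mu j) s (f j)).
Proof.
move=> hl.
have [t ht] := fin_all_exists (fun j => root1 (l j)).
have hd : forall j, dv2 ((l j).[1]).
  apply: hVindep; exists (- \sum_j gact (t j) s (f j)), (\sum_j gact (l j) s (f j)).
  split => //.
  have -> : \sum_j gact (l j) s (f j) = \sum_j (s (gact (t j) s (f j)) - gact (t j) s (f j))
       + \sum_i (l i).[1] *: f i.
    rewrite -big_split; apply: eq_bigr => j _ /=.
    by rewrite {1}ht gact_addp gact_mul gact_Xm1 gact_C gact_B gact_s.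
  rewrite sumrB linearN /= linear_sum /=.
  move: (\sum_i _ *: f i) => X; move: (\sum_i s _) => Y; move: (\sum_i gact _ _ _) => Z.
  by rewrite opprK addrA [- Y + Z]addrC -opprB addNr add0r.
have [d hd'] := fin_all_exists hd.
have [psi hpsi] := root1 (Phi - 2%:R).
have e1 : (Phi - 2%:R).[1] = 0 by rewrite /Phi !hornerE expr1n; ring.
rewrite e1 addr0 in hpsi.
exists (fun j => t j - (d j)%:P * psi); split.
  move=> j; exists (d j)%:P.
  rewrite {1}(ht j) (hd' j) polyCM.
  have -> : (2%:R : R)%:P = Phi - psi * ('X - 1) by rewrite -hpsi polyC_natr; ring.
  ring.
have e2 : \sum_j gact (l j) s (f j) =
   s (\sum_j gact (t j - (d j)%:P * psi) s (f j)) - \sum_j gact (t j - (d j)%:P * psi) s (f j)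
   + \sum_j d j *: tr (f j).
  rewrite linear_sum /= -sumrB -big_split; apply: eq_bigr => j _ /=.
  have -> : l j = (t j - (d j)%:P * psi) * ('X - 1) + (d j)%:P * Phi.
    rewrite {1}(ht j) (hd' j) polyCM.
    have -> : (2%:R : R)%:P = Phi - psi * ('X - 1) by rewrite -hpsi polyC_natr; ring.
    ring.
  by rewrite gact_addp !gact_mul gact_Xm1 gact_C gact_Phi gact_B gact_s.
apply: FH_sub1; move: hl; rewrite e2 => hl.
have hs : FH (\sum_j d j *: tr (f j)) by apply: FH_sum => j _; apply: FHZ; apply: tr_FH.
have := FHB hl hs.
by rewrite addrK.
Qed.

Lemma indepk k : forall l : 'I_q -> {poly R}, FH (\sum_j gact (l j) s (f j)) ->
  forall j, exists mu nu, l j = ('X - 1) ^+ k * mu + nu * Phi.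
Proof.
elim: k => [|k IH] l hl j.
  by exists (l j), 0; rewrite expr0 mul1r mul0r addr0.
have [mu [hmu hf]] := indep1 hl.
have [nu hnu] := hmu j.
have [mu' [nu' h']] := IH mu hf j.
exists mu', (('X - 1) * nu' + nu).
by rewrite hnu h' exprS; ring.
Qed.

Lemma lambda_indep (l : 'I_q -> {poly R}) : FH (\sum_j gact (l j) s (f j)) ->
  forall j, exists q1 q2 : {poly R},
    l j = q1 * ('X^(2 ^ n) - 1) + q2 * (1 + 'X^(2 ^ n.-1)).
Proof.
move=> hl j.
have [g hg] := Xm1_pow R n.-1.
have : exists qq, l j = qq * Phi.
  apply: (div_Phi hU Phi_monic) => m.
  have [mu [nu e]] := indepk (K * m) hl j.
  have [h hh] := Phi_pow Phi g m.
  exists (g ^+ m * mu), (h * mu + nu).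
  by rewrite e exprM hg -/Phi hh; ring.
move=> [qq hq]; exists 0, qq; by rewrite mul0r add0r hq.
Qed.
End LIndep.

Section Span.
Variable U : seq A.
Definition Rsp x := exists c : 'I_(size U) -> R, x = \sum_k c k *: U`_k.
Lemma Rsp0 : Rsp 0.
Proof. by exists (fun _ => 0); rewrite big1 // => k _; rewrite scale0r. Qed.
Lemma RspD x y : Rsp x -> Rsp y -> Rsp (x + y).
Proof.
move=> [c1 ->] [c2 ->]; exists (fun k => c1 k + c2 k).
by rewrite -big_split; apply: eq_bigr => k _; rewrite scalerDl.
Qed.
Lemma RspZ a x : Rsp x -> Rsp (a *: x).
Proof.
move=> [c ->]; exists (fun k => a * c k).
by rewrite scaler_sumr; apply: eq_bigr => k _; rewrite scalerA.
Qed.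
Lemma Rsp_sum (I : Type) (l : seq I) (P : pred I) (F : I -> A) :
  (forall i, P i -> Rsp (F i)) -> Rsp (\sum_(i <- l | P i) F i).
Proof. by move=> h; apply: big_ind => //; [exact: Rsp0 | exact: RspD]. Qed.
Lemma Rsp_mem x : x \in U -> Rsp x.
Proof.
move=> xU; have hi : (index x U < size U)%N by rewrite index_mem.
exists (fun k => (k == Ordinal hi)%:R).
rewrite (bigD1 (Ordinal hi)) //= eqxx scale1r nth_index // big1 ?addr0 // => k /negbTE ->.
by rewrite scale0r.
Qed.
End Span.

Lemma U_span : fin_gen_group_ring s ->
  exists U : seq A, forall x, exists c : 'I_(size U) -> R, x = \sum_k c k *: U`_k.
Proof.
move=> [g hg].
exists [seq iter i s gj | gj <- g, i <- iota 0 (2 ^ n)] => x.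
have [pp ->] := hg x.
apply: Rsp_sum => j _; rewrite /gact; apply: Rsp_sum => i _; apply: RspZ.
apply: Rsp_mem; rewrite iter_mod.
apply: (allpairs_f (fun gj i => iter i s gj)); first by rewrite mem_nth.
by rewrite mem_iota add0n ltn_mod expn_gt0.
Qed.

End Main.


Lemma rearr (V : zmodType) (a1 b1 c1 a2 b2 c2 : V) :
  (a1 - b1 + c1) + (a2 - b2 + c2) = (a1 + a2) - (b1 + b2) + (c1 + c2).
Proof. by rewrite addrACA (addrACA a1) opprD. Qed.

Section Final.
Variables (R : idomainType) (A : lmodType R) (n : nat) (s : {linear A -> A}).
Hypothesis hU : unramified_Z2_integers R.
Hypothesis n0 : (0 < n)%N.
Hypothesis hper : iter (2 ^ n) s =1 id.
Hypothesis htf : torsion_free A.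

Local Notation K := (2 ^ n.-1)%N.
Local Notation FH := (fixedH n s).
Local Notation tr := (trH n s).

Lemma inN0 : inN n s 0.
Proof.
exists 0, 0; split; first exact: FH0.
by rewrite tr0 linear0 subrr add0r scaler0.
Qed.
Lemma inND x y : inN n s x -> inN n s y -> inN n s (x + y).
Proof.
move=> [a1 [z1 [h1 ->]]] [a2 [z2 [h2 ->]]].
exists (a1 + a2), (z1 + z2); split; first exact: FHD.
by rewrite rearr trD -linearD scalerDr.
Qed.
Lemma inNZ (c : R) x : inN n s x -> inN n s (c *: x).
Proof.
move=> [a [z [h ->]]]; exists (c *: a), (c *: z); split; first exact: FHZ.
by rewrite scalerDr scalerBr trZ -linearZ; congr (_ + _); rewrite !scalerA mulrC.
Qed.

Lemma Vp0 : Vp n s 0.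
Proof.
exists 0, 0; split; first exact: FH0.
by rewrite linear0 subrr add0r.
Qed.
Lemma VpD x y : Vp n s x -> Vp n s y -> Vp n s (x + y).
Proof.
move=> [a1 [z1 [h1 ->]]] [a2 [z2 [h2 ->]]].
exists (a1 + a2), (z1 + z2); split; first exact: FHD.
by rewrite rearr linearD.
Qed.
Lemma VpZ (c : R) x : Vp n s x -> Vp n s (c *: x).
Proof.
move=> [a [z [h ->]]]; exists (c *: a), (c *: z); split; first exact: FHZ.
by rewrite scalerDr scalerBr -linearZ.
Qed.

Lemma Vp2 x : Vp n s (2%:R *: x).
Proof.
have tel : s (\sum_(i < K) iter i s x) - \sum_(i < K) iter i s x = iter K s x - x.
  rewrite linear_sum /= -sumrB.
  have -> : \sum_(i < K) (s (iter i s x) - iter i s x) =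
            \sum_(0 <= i < K) (iter i.+1 s x - iter i s x) by rewrite big_mkord.
  by rewrite telescope_sumr.
exists (- \sum_(i < K) iter i s x), (tr x); split; first exact: tr_FH.
rewrite linearN /= opprK.
move: tel; move: (\sum_(i < K) iter i s x) => Sg tel.
have -> : - s Sg + Sg = - (s Sg - Sg) by rewrite opprB addrC.
rewrite tel opprB /trH.
by rewrite scaler_nat mulr2n addrACA addNr addr0.
Qed.

Lemma trVp y : Vp n s y -> inN n s (tr y).
Proof.
move=> [a [h [hh ->]]]; exists a, h; split => //.
by rewrite trD trB tr_s (tr_fixed hh).
Qed.

End Final.

Unset Implicit Arguments. Set Strict Implicit.

Theorem lemma2p2 (R : idomainType) (A : lmodType R) (n : nat)
  (s : {linear A -> A}) :
  unramified_Z2_integers R ->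
  (0 < n)%N ->
  iter (2 ^ n) s =1 id ->
  fin_gen_group_ring s ->
  torsion_free A ->
  (exists (r : nat) (b : 'I_r -> A), Q_basis n s b) /\
  (forall (r : nat) (b : 'I_r -> A), Q_basis n s b ->
     exists (m : nat) (e : 'I_m -> A), Lambda_basis n s (cat_fam b e)).
Proof.
move=> hU n0 hper hfg htf.
have [U hUs] := U_span hper hfg.
split.
  pose w (k : 'I_(size U)) := trH n s (U`_k).
  pose v (i : 'I_0) := (0 : A).
  have Pm2w : forall k, inN n s (2%:R *: w k).
    move=> k; exists 0, (w k); split; first exact: tr_FH.
    by rewrite tr0 linear0 subrr add0r.
  have h0 : indepS (inN n s) v w set0.
    by move=> d c _; split => [[]//|k]; rewrite in_set0.
  have [S [hS hsp]] := extend_basis hU (@inN0 R A n s) (@inND R A n s) (@inNZ R A n s) Pm2w h0.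
  exists #|S|, (fun j : 'I_#|S| => U`_(enum_val j)); split.
    move=> a; have [c ->] := hUs a.
    have : inspan (inN n s) v w S (trH n s (\sum_k c k *: U`_k)).
      rewrite tr_sum; apply: inspan_sum; [exact: (@inN0 R A n s) | exact: (@inND R A n s)|] => k _.
      rewrite trZ; apply: inspanZ; [exact: (@inNZ R A n s) | exact: hsp].
    move=> [d [c' hc']]; exists (fun j => c' (enum_val j)).
    by move: hc'; rewrite /comb big_ord0 add0r sumS.
  move=> c hc i.
  have := hS (fun _ => 0) (liftc c).
  rewrite /comb big_ord0 add0r sumS.
  have -> : \sum_(j < #|S|) liftc c (enum_val j) *: ef w j =
            \sum_(j < #|S|) c j *: trH n s (U`_(enum_val j)).
    by apply: eq_bigr => j _; rewrite liftcE.
  move=> /(_ hc) [_ h2]; rewrite -(liftcE c i); apply: h2; exact: enum_valP.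
move=> r b [_ hQi].
pose w (k : 'I_(size U)) := U`_k.
have h0 : indepS (Vp n s) b w set0.
  move=> d c; rewrite /comb big_set0 addr0 => hV; split => [i|k]; last by rewrite in_set0.
  apply: hQi; move: (trVp hV); rewrite tr_sum.
  by under eq_bigr do rewrite trZ.
have [S [hS hsp]] := extend_basis hU (@Vp0 R A n s) (@VpD R A n s) (@VpZ R A n s)
   (fun k => @Vp2 R A n s n0 hper (w k)) h0.
exists #|S|, (ef w (S := S)); split.
  move=> x; apply: (lambda_span hU n0 hper _ hUs) => y.
  apply: fam_span; have [c ->] := hUs y.
  apply: inspan_sum; [exact: (@Vp0 R A n s) | exact: (@VpD R A n s) |] => k _.
  apply: inspanZ; [exact: (@VpZ R A n s) | exact: hsp].
move=> l hl j; apply: (lambda_indep hU n0 hper htf _ hl) => c hc i.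
exact: (fam_indep hS hc).
Qed.
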